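(* Let $G$ be a graph with at least one cut-vertex. Let $\beta$ be the number of vertices of a largest block of $G$ and $\tilde{\Delta}$ the maximum degree of a cut-vertex of $G$ in its block-cutpoint graph. Then $\Gamma(G)\le(\beta-1)\tilde{\Delta}+1$.
   Context: A Grundy-coloring of $G$ is a proper coloring with nonempty color classes $C_1,\ldots,C_k$ such that for $i<j$ each vertex of $C_j$ has a neighbor in $C_i$; $\Gamma(G)$ is the maximum number of colors of a Grundy-coloring. A cut-vertex is a vertex whose removal increases the number of connected components. A block is a maximal 2-connected subgraph or a bridge (as a $K_2$). The block-cutpoint graph is the bipartite graph whose parts are the cut-vertices and the blocks of $G$, a cut-vertex $v$ being adjacent to a block $B$ iff $v\in B$. *)

(* Defs.v *)
(* A finite simple graph is a symmetric irreflexive relation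
   e on a finite type T of vertices. *)
From mathcomp Require Import all_boot.
Set Implicit Arguments. Unset Strict Implicit. Unset Printing Implicit Defensive.

Section Graph.
Variables (T : finType) (e : rel T).

Definition erest (S : {set T}) : rel T :=
  fun x y => [&& x \in S, y \in S & e x y].

Definition components (S : {set T}) : {set {set T}} :=
  [set [set y in S | connect (erest S) x y] | x in S].

Definition ncomp (S : {set T}) : nat := #|components S|.

Definition cut_vertex (v : T) : bool :=
  ncomp [set: T] < ncomp ([set: T] :\ v).

(* the induced subgraph on B has at least 2 vertices, is connected and has no
   cut-vertex: for #|B| >= 3 this is 2-connectivity, for #|B| = 2 it is K2 *)
Definition nonsep (B : {set T}) : bool :=
  [&& 2 <= #|B|, ncomp B == 1 & [forall v in B, ncomp (B :\ v) <= ncomp B]].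

(* blocks: maximal 2-connected (induced) subgraphs or bridges (as K2),
   represented by their vertex sets *)
Definition is_block (B : {set T}) : bool :=
  nonsep B && [forall B' : {set T}, (B \proper B') ==> ~~ nonsep B'].

Definition beta : nat := \max_(B : {set T} | is_block B) #|B|.

(* degree of a cut-vertex v in the block-cutpoint graph = number of blocks
   containing v *)
Definition bc_degree (v : T) : nat := #|[set B : {set T} | is_block B & v \in B]|.

Definition Delta_tilde : nat := \max_(v | cut_vertex v) bc_degree v.

Definition grundy_coloring (k : nat) (c : {ffun T -> 'I_#|T|.+1}) : bool :=
  [&& [forall v, (1 <= c v) && (c v <= k)],
      [forall i : 'I_#|T|.+1, (1 <= i <= k) ==> [exists v, c v == i]],
      [forall u, forall v, e u v ==> (c u != c v)] &
      [forall v, forall i : 'I_#|T|.+1,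
         (1 <= i) && (i < c v) ==> [exists u, e v u && (c u == i)]]].

(* Grundy number: maximum number of colors of a Grundy coloring
   (a Grundy coloring has at most #|T| colors since its classes are nonempty
   and disjoint) *)
Definition grundy_number : nat :=
  \max_(k < #|T|.+1 | [exists c : {ffun T -> 'I_#|T|.+1}, grundy_coloring k c]) k.

End Graph.

(* Main.v *)
Require Import Defs.
From mathcomp Require Import all_boot.
From mathcomp Require Import zify.
Set Implicit Arguments. Unset Strict Implicit. Unset Printing Implicit Defensive.

Section Aux.
Variables (T : finType) (e : rel T).
Implicit Types (S B : {set T}) (x y z a b r : T) (s : seq T).
Hypothesis e_sym : symmetric e.
Hypothesis e_irr : irreflexive e.

Definition gc (S : {set T}) x := [set y in S | connect (erest e S) x y].
Definition conn (S : {set T}) :=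
  forall x y, x \in S -> y \in S -> connect (erest e S) x y.

Lemma erest_sym S : symmetric (erest e S).
Proof. by move=> x y; rewrite /erest e_sym; case: (x \in S); case: (y \in S). Qed.

Lemma csym S x y : connect (erest e S) x y = connect (erest e S) y x.
Proof. exact: (sym_connect_sym (erest_sym S)). Qed.

Lemma compE S : components e S = [set gc S x | x in S].
Proof. by []. Qed.

Lemma gc_self S x : x \in S -> x \in gc S x.
Proof. by move=> xS; rewrite inE xS connect0. Qed.

Lemma gcE S x y : x \in S -> y \in S -> (gc S x == gc S y) = connect (erest e S) x y.
Proof.
move=> xS yS; apply/eqP/idP => [H|H].
  by have := gc_self yS; rewrite -H inE => /andP[].
apply/setP => z; rewrite !inE; case: (z \in S) => //=.
apply/idP/idP => Hz; first by rewrite csym in H; exact: connect_trans H Hz.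
exact: connect_trans H Hz.
Qed.

Lemma ncomp_le1 S : (ncomp e S <= 1) <-> conn S.
Proof.
split => [/card_le1_eqP H x y xS yS|H].
  rewrite -gcE //; apply/eqP; apply: H; apply/imsetP; by [exists x|exists y].
apply/card_le1_eqP => C1 C2 /imsetP[x xS ->] /imsetP[y yS ->].
by apply/eqP; rewrite gcE //; apply: H.
Qed.

Lemma ncomp_gt0 S x : x \in S -> 0 < ncomp e S.
Proof. by move=> xS; apply/card_gt0P; exists (gc S x); apply/imsetP; exists x. Qed.

Lemma nonsepP B : nonsep e B <->
  [/\ 2 <= #|B|, conn B & forall y, y \in B -> conn (B :\ y)].
Proof.
split.
  case/and3P => H1 /eqP H2 /forall_inP H3; split => //; first by apply/ncomp_le1; rewrite H2.
  by move=> y yB; apply/ncomp_le1; rewrite -H2; apply: H3.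
case=> H1 H2 H3.
have [x xB] : exists x, x \in B.
  by have /card_gt0P := leq_trans (isT : 0 < 2) H1.
have Hn : ncomp e B = 1.
  by apply/eqP; rewrite eqn_leq (ncomp_gt0 xB) andbT; apply/ncomp_le1.
apply/and3P; split => //; first by rewrite Hn.
by apply/forall_inP => y yB; rewrite Hn; apply/ncomp_le1; apply: H3.
Qed.

Lemma conn_mono S S' x y : S \subset S' -> connect (erest e S) x y -> connect (erest e S') x y.
Proof.
move=> /subsetP sub; apply: connect_sub => a b /and3P[aS bS eab].
by apply: connect1; rewrite /erest eab !sub.
Qed.

Lemma path_conn S a s : path e a s -> (forall w, w \in a :: s -> w \in S) -> connect (erest e S) a (last a s).
Proof.
elim: s a => [|b s IH] a /=; first by rewrite connect0.
case/andP=> eab ps H.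
have aS : a \in S by apply: H; rewrite inE eqxx.
have bS : b \in S by apply: H; rewrite !inE eqxx orbT.
apply: connect_trans (IH b ps _); last by move=> w wbs; apply: H; rewrite inE wbs orbT.
by apply: connect1; rewrite /erest aS bS.
Qed.

Lemma conn_root S r : r \in S -> (forall z, z \in S -> connect (erest e S) r z) -> conn S.
Proof.
move=> rS H x y xS yS; apply: connect_trans (H _ yS).
by rewrite csym; apply: H.
Qed.


Lemma edge_nonsep u v : e u v -> nonsep e [set u; v].
Proof.
move=> euv; have uv : u != v by apply: contraTneq euv => ->; rewrite e_irr.
apply/nonsepP; split; first by rewrite cards2 uv.
  move=> x y; rewrite !inE => /orP[]/eqP-> /orP[]/eqP->; rewrite ?connect0 //;
  apply: connect1; rewrite /erest !inE !eqxx ?orbT /=; by [|rewrite e_sym].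
move=> y yB x z; rewrite !inE => /andP[xy xB] /andP[zy zB].
suff -> : x = z by rewrite connect0.
move: yB xB zB xy zy; rewrite !inE.
by do 3 case/orP => /eqP->; rewrite ?eqxx.
Qed.

Lemma exists_block A : nonsep e A -> exists B, is_block e B && (A \subset B).
Proof.
move=> nA.
pose P := [pred B : {set T} | nonsep e B && (A \subset B)].
have PA : P A by rewrite /P inE nA subxx.
case: (@arg_maxnP _ A P (fun B => #|B|) PA) => B /andP[nB AB] Hmax.
exists B; rewrite AB andbT /is_block nB /=.
apply/forallP => B'; apply/implyP => pBB'; apply/negP => nB'.
have := Hmax B'; rewrite /P inE nB' (subset_trans AB (proper_sub pBB')) => /(_ isT).
move=> H; move: (proper_card pBB'); rewrite ltnNge; case/negP; exact: H.
Qed.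

Definition hmap S v (C : {set T}) := gc S (odflt v [pick x in C]).

Lemma hmapE S S' v z : S' \subset S -> z \in S' -> hmap S v (gc S' z) = gc S z.
Proof.
move=> sub zS; rewrite /hmap; case: pickP => [x|]; last by move/(_ z); rewrite gc_self.
rewrite inE => /andP[xS czx] /=; apply/eqP; rewrite gcE ?(subsetP sub) //.
by rewrite csym; apply: conn_mono czx.
Qed.

Lemma noncut_conn v a b : ~~ cut_vertex e v -> a != v -> b != v ->
  connect (erest e [set: T]) v a -> connect (erest e [set: T]) v b ->
  connect (erest e ([set: T] :\ v)) a b.
Proof.
move=> ncut av bv cva cvb; apply/idPn => nab; case/negP: ncut.
set Tv := [set: T] :\ v.
have sub : Tv \subset [set: T] by apply: subsetT.
have aTv : a \in Tv by rewrite !inE av.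
have bTv : b \in Tv by rewrite !inE bv.
have Heq : components e [set: T] = hmap [set: T] v @: components e Tv.
  apply/setP => C; apply/imsetP/imsetP => [[z _ ->]|[C' /imsetP[z zTv ->] ->]].
    case: (eqVneq z v) => [->|zv].
      exists (gc Tv a); first by apply/imsetP; exists a.
      rewrite (hmapE _ sub aTv); apply/eqP; rewrite gcE ?inE //.
    exists (gc Tv z); first by apply/imsetP; exists z; rewrite // !inE zv.
    by rewrite (hmapE _ sub) // !inE zv.
  by exists z; rewrite ?inE // (hmapE _ sub).
rewrite /cut_vertex /ncomp Heq ltn_neqAle leq_imset_card andbT.
apply/imset_injP => inj.
have : gc Tv a = gc Tv b.
  apply: inj; [by apply/imsetP; exists a|by apply/imsetP; exists b|].
  rewrite !(hmapE _ sub) //; apply/eqP; rewrite gcE ?inE //.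
  by apply: connect_trans cvb; rewrite csym.
by move/eqP; rewrite gcE // (negbTE nab).
Qed.

Lemma cut_has_nb c : cut_vertex e c -> exists u, e c u.
Proof.
move=> cut; case: (pickP (e c)) => [u ecu|iso]; first by exists u.
suff: ~~ cut_vertex e c by rewrite cut.
rewrite /cut_vertex -leqNgt.
set Tc := [set: T] :\ c.
have sub : Tc \subset [set: T] by apply: subsetT.
have lift z1 z2 : z1 != c -> connect (erest e [set: T]) z1 z2 -> connect (erest e Tc) z1 z2.
  move=> z1c /connectP[p pp ->]; elim: p z1 z1c pp => [|w p IH] z1 z1c /=; first by rewrite connect0.
  case/andP=> /and3P[_ _ ez1w] pp.
  have wc : w != c by apply: contraTneq ez1w => ->; by rewrite e_sym iso.
  apply: connect_trans (IH w wc pp); apply: connect1; by rewrite /erest !inE z1c wc.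
rewrite /ncomp.
have -> : #|components e Tc| = #|hmap [set: T] c @: components e Tc|.
  apply/esym/eqP/imset_injP => C1 C2 /imsetP[z1 z1T ->] /imsetP[z2 z2T ->].
  rewrite !(hmapE _ sub) // => /eqP; rewrite gcE ?inE // => H.
  apply/eqP; rewrite gcE //; apply: lift => //; by move: z1T; rewrite !inE andbT.
apply: subset_leq_card; apply/subsetP => C /imsetP[C' /imsetP[z zT ->] ->].
by rewrite (hmapE _ sub) //; apply/imsetP; exists z; rewrite ?inE.
Qed.


Lemma ear_split v x I z : path e v (rcons I x) -> z \in I ->
  exists p1 p2, [/\ I = p1 ++ z :: p2, path e v (rcons p1 z) & path e z (rcons p2 x)].
Proof.
move=> pI zI; case/splitPr: zI pI => p1 p2.
rewrite rcons_cat cat_path /= => /andP[pp1 /andP[ez pp2]].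
by exists p1, p2; split => //; rewrite rcons_path pp1 ez.
Qed.

Lemma Hpre S v z p1 : path e v (rcons p1 z) -> v \in S -> z \in S -> {subset p1 <= S} ->
  connect (erest e S) v z.
Proof.
move=> pp vS zS sub; have := path_conn (S := S) pp; rewrite last_rcons; apply.
move=> w; rewrite inE mem_rcons inE => /orP[/eqP->//|/orP[/eqP->//|]]; exact: sub.
Qed.

Lemma ear B v x I : nonsep e B -> v \in B -> x \in B -> x != v ->
  path e v (rcons I x) -> all (fun z => z \notin B) I -> uniq I ->
  nonsep e (B :|: [set z | z \in I]).
Proof.
move=> nB vB xB xv pI /allP IB uI.
set B' := B :|: [set z | z \in I].
case/nonsepP: nB => c2 cB cBy.
have sBB' : B \subset B' by apply: subsetUl.
have memI z : (z \in B') = (z \in B) || (z \in I) by rewrite !inE.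
have IB' z : z \in I -> z \in B' by move=> zI; rewrite memI zI orbT.
apply/nonsepP; split.
- exact: leq_trans c2 (subset_leq_card sBB').
- apply: (@conn_root _ v); first by rewrite memI vB.
  move=> z; rewrite memI => /orP[zB|zI]; first exact: conn_mono sBB' (cB v z vB zB).
  have [p1 [p2 [Ie pp1 _]]] := ear_split pI zI.
  apply: Hpre pp1 _ _ _; rewrite ?memI ?vB ?zI ?orbT //.
  by move=> w wp1; apply: IB'; rewrite Ie mem_cat wp1.
move=> y; rewrite memI => /orP[yB|yI].
- have yI : y \notin I by apply/negP => /IB; rewrite yB.
  have nIy w : w \in I -> w != y by move=> wI; apply: contraTneq wI => ->.
  set r := if y == v then x else v.
  have rB : r \in B by rewrite /r; case: ifP.
  have ry : r != y by rewrite /r; case: ifP => [/eqP ->//|]; rewrite eq_sym => ->.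
  apply: (@conn_root _ r); first by rewrite in_setD1 ry memI rB.
  move=> z; rewrite !inE => /andP[zy]; rewrite -memI => /[dup] zB' ; rewrite memI => /orP[zB|zI].
    apply: conn_mono (cBy y yB r z _ _); rewrite ?inE ?ry ?zy //.
    by apply: setSD.
  have [p1 [p2 [Ie pp1 pp2]]] := ear_split pI zI.
  rewrite /r; case: ifP => [/eqP Eyv|Nyv].
    rewrite csym; have := path_conn (S := B' :\ y) pp2; rewrite last_rcons; apply.
    move=> w; rewrite inE mem_rcons inE => /orP[/eqP->|/orP[/eqP->|wp2]].
    + by rewrite in_setD1 zy zB'.
    + by rewrite in_setD1 memI xB Eyv xv.
    + have wI : w \in I by rewrite Ie mem_cat inE wp2 !orbT.
      by rewrite in_setD1 nIy // IB'.
  apply: Hpre pp1 _ _ _; first by rewrite in_setD1 memI vB eq_sym Nyv.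
    by rewrite in_setD1 zy zB'.
  move=> w wp1; have wI : w \in I by rewrite Ie mem_cat wp1.
  by rewrite in_setD1 nIy // IB'.
- have yB : y \notin B by apply: IB.
  have sBy : B \subset B' :\ y.
    apply/subsetP => w wB; rewrite in_setD1 memI wB andbT /=; by apply: contraTneq wB => ->.
  have vy : v \in B' :\ y by apply: (subsetP sBy).
  apply: (@conn_root _ v) => // z; rewrite !inE => /andP[zy]; rewrite -memI => /[dup] zB'; rewrite memI => /orP[zB|zI].
    exact: conn_mono sBy (cB v z vB zB).
  have [p1 [p2 [Ie pp1 pp2]]] := ear_split pI zI.
  move: uI; rewrite Ie cat_uniq => /and3P[_ hasn _].
  case yp1 : (y \in p1).
    have yp2 : y \notin z :: p2 by apply: contraNN hasn => H; apply/hasP; exists y.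
    apply: connect_trans (conn_mono sBy (cB v x vB xB)) _.
    rewrite csym; have := path_conn (S := B' :\ y) pp2; rewrite last_rcons; apply.
    move=> w; rewrite inE mem_rcons inE => /orP[/eqP->|/orP[/eqP->|wp2]].
    + by rewrite in_setD1 zy zB'.
    + exact: (subsetP sBy).
    + have wI : w \in I by rewrite Ie mem_cat inE wp2 !orbT.
      rewrite in_setD1 IB' // andbT; apply: contraNneq yp2 => <-; by rewrite inE wp2 orbT.
  apply: Hpre pp1 _ _ _ => //; first by rewrite in_setD1 zy zB'.
  move=> w wp1; have wI : w \in I by rewrite Ie mem_cat wp1.
  rewrite in_setD1 IB' // andbT; apply: contraFneq yp1 => <-; exact: wp1.
Qed.


Lemma extract B p w : path e w p -> w \notin B -> last w p \in B -> uniq (w :: p) ->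
  exists p1 x, [/\ path e w (rcons p1 x), x \in B, {subset rcons p1 x <= p},
     all (fun z => z \notin B) (w :: p1) & uniq (w :: p1)].
Proof.
elim: p w => [|a p IH] w /=; first by move=> _ /negbTE ->.
case/andP=> ewa pp wB lB /andP[wap uap].
case aB : (a \in B).
  exists [::], a; split => //=; first by rewrite ewa.
  - by move=> z; rewrite !inE => ->.
  - by rewrite wB.
have [p1 [x [pp1 xB sub allp1 up1]]] := IH a pp (negbT aB) lB uap.
exists (a :: p1), x; split => //.
- by rewrite /= ewa.
- by move=> z; rewrite rcons_cons !inE => /orP[->//|/sub ->]; rewrite orbT.
- by rewrite /= wB.
- apply/andP; split; last exact: up1.
  apply: contra wap; rewrite !inE => /orP[->//|wp1].
  by rewrite sub ?orbT // mem_rcons inE wp1 orbT.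
Qed.


Lemma path_in S a p : path (erest e S) a p -> {subset p <= S}.
Proof.
elim: p a => [|b p IH] a //= /andP[/and3P[_ bS _] pp] z; rewrite inE => /orP[/eqP->//|].
exact: IH pp z.
Qed.

Lemma noncut_block v B w : ~~ cut_vertex e v -> is_block e B -> v \in B -> e v w -> w \in B.
Proof.
move=> ncut /andP[nB /forallP maxB] vB evw; apply/idPn => wB.
case/nonsepP: (nB) => c2 cB cBy.
have [u [uB uv]] : exists u, u \in B /\ u != v.
  case/card_gt1P: c2 => a [b [aB bB ab]].
  case: (eqVneq a v) => [av|av]; last by exists a.
  by exists b; split => //; rewrite -av eq_sym.
have wv : w != v by apply: contraTneq evw => ->; rewrite e_irr.
have cvu : connect (erest e [set: T]) v u := conn_mono (subsetT B) (cB v u vB uB).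
have cvw : connect (erest e [set: T]) v w by apply: connect1; rewrite /erest !inE evw.
case/connectP: (noncut_conn ncut wv uv cvw cvu) => p pp Hu.
move: Hu; case/shortenP: pp => p' pp' up' _ Hu.
have pin := path_in pp'.
have pe : path e w p' by apply: sub_path pp' => a b /and3P[].
have [p1 [x [pp1 xB sub allp1 up1]]] := extract pe wB (etrans (esym (f_equal (fun t => t \in B) Hu)) uB) up'.
have xv : x != v.
  have : x \in [set: T] :\ v by apply: pin; apply: sub; rewrite mem_rcons mem_head.
  by rewrite !inE andbT.
have pI : path e v (rcons (w :: p1) x) by rewrite rcons_cons /= evw.
have nB' := ear nB vB xB xv pI allp1 up1.
have := maxB (B :|: [set z | z \in w :: p1]); rewrite nB' /= implybF => /negP; apply.
apply/properP; split; first exact: subsetUl.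
by exists w => //; rewrite !inE eqxx orbT.
Qed.


Definition Nb v := [set u | e v u].

Lemma bigcup_card (P : {set {set T}}) v :
  #|\bigcup_(B in P) (B :\ v)| <= \sum_(B in P) #|B :\ v|.
Proof.
elim/big_rec2: _ => [|B n U _ le]; first by rewrite cards0.
by apply: leq_trans (leq_card_setU _ _).1 _; rewrite leq_add2l.
Qed.

Lemma block_le B : is_block e B -> #|B| <= beta e.
Proof. by move=> bB; apply: (leq_bigmax_cond (F := fun B : {set T} => #|B|)) bB. Qed.

Lemma deg_cut v : #|Nb v| <= bc_degree e v * (beta e - 1).
Proof.
set Bl := [set B : {set T} | is_block e B & v \in B].
have sub : Nb v \subset \bigcup_(B in Bl) (B :\ v).
  apply/subsetP => u; rewrite inE => evu.
  have [B /andP[bB sB]] := exists_block (edge_nonsep evu).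
  apply/bigcupP; exists B; first by rewrite inE bB (subsetP sB) // !inE eqxx.
  rewrite in_setD1 (subsetP sB) ?andbT; last by rewrite !inE eqxx orbT.
  by apply: contraTneq evu => ->; rewrite e_irr.
apply: leq_trans (subset_leq_card sub) _.
apply: leq_trans (bigcup_card Bl v) _.
rewrite /bc_degree -/Bl -sum_nat_const; apply: leq_sum => B; rewrite inE => /andP[bB vBB].
have := block_le bB; rewrite (cardsD1 v B) vBB; lia.
Qed.

Lemma deg_noncut v u : ~~ cut_vertex e v -> e v u -> #|Nb v| <= beta e - 1.
Proof.
move=> ncut evu.
have [B /andP[bB sB]] := exists_block (edge_nonsep evu).
have vB : v \in B by rewrite (subsetP sB) // !inE eqxx.
have sub : Nb v \subset B :\ v.
  apply/subsetP => w; rewrite inE => evw; rewrite in_setD1 (noncut_block ncut bB vB evw) andbT.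
  by apply: contraTneq evw => ->; rewrite e_irr.
apply: leq_trans (subset_leq_card sub) _.
have := block_le bB; rewrite (cardsD1 v B) vB; lia.
Qed.

Lemma bc_le v : cut_vertex e v -> bc_degree e v <= Delta_tilde e.
Proof. by move=> cv; apply: (leq_bigmax_cond (F := bc_degree e)) cv. Qed.

Lemma Delta_pos : (exists v, cut_vertex e v) -> 0 < Delta_tilde e.
Proof.
case=> c cc; apply: leq_trans (bc_le cc).
have [u ecu] := cut_has_nb cc.
have [B /andP[bB sB]] := exists_block (edge_nonsep ecu).
apply/card_gt0P; exists B; by rewrite inE bB (subsetP sB) // !inE eqxx.
Qed.

Lemma grundy_deg k (c : {ffun T -> 'I_#|T|.+1}) : grundy_coloring e k c -> 0 < k -> k < #|T|.+1 ->
  exists v, k.-1 <= #|Nb v|.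
Proof.
case/and4P => _ /forallP Hne _ /forallP Hnb kpos klt.
have := Hne (Ordinal klt); rewrite /= kpos leqnn => /existsP[v /eqP cv].
exists v.
pose f (j : 'I_k.-1) : 'I_#|T|.+1 := inord j.+1.
have fval (j : 'I_k.-1) : nat_of_ord (f j) = j.+1.
  by rewrite /f inordK //; have := ltn_ord j; lia.
have finj : injective f.
  move=> j1 j2 H; have := fval j1; rewrite H fval => -[] H'; exact: val_inj.
have sub : f @: [set: 'I_k.-1] \subset c @: Nb v.
  apply/subsetP => i /imsetP[j _ ->].
  have := Hnb v; move=> /forallP /(_ (f j)); rewrite fval cv /=.
  have jl := ltn_ord j.
  have -> : j.+1 < k by lia.
  move=> /existsP[u /andP[evu /eqP cu]]; apply/imsetP; exists u; by rewrite ?inE.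
have := subset_leq_card sub; rewrite (card_imset _ finj) cardsT card_ord => H.
exact: leq_trans H (leq_imset_card _ _).
Qed.

Hypothesis hcut : exists v : T, cut_vertex e v.

Lemma main_aux : grundy_number e <= (beta e - 1) * Delta_tilde e + 1.
Proof.
rewrite /grundy_number; apply/bigmax_leqP => k /existsP[c gc].
case: (posnP k) => [->//|kpos].
have [v hv] := grundy_deg gc kpos (ltn_ord k).
have Dp := Delta_pos hcut.
case cv: (cut_vertex e v).
  have h1 := deg_cut v; have h2 := bc_le cv.
  have h3 : bc_degree e v * (beta e - 1) <= Delta_tilde e * (beta e - 1) by apply: leq_mul.
  rewrite mulnC; lia.
case: (pickP (e v)) => [u evu|none].
  have h1 := deg_noncut (negbT cv) evu.
  have h2 : beta e - 1 <= (beta e - 1) * Delta_tilde e by apply: leq_pmulr.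
  lia.
have : Nb v = set0 by apply/setP => u; rewrite !inE none.
move=> E; move: hv; rewrite E cards0; move=> h; apply: leq_trans (leq_addl ((beta e - 1) * Delta_tilde e) 1); lia.
Qed.

End Aux.

Theorem corollary1 (T : finType) (e : rel T)
  (e_sym : symmetric e) (e_irr : irreflexive e)
  (hcut : exists v : T, cut_vertex e v) :
  grundy_number e <= (beta e - 1) * Delta_tilde e + 1.
Proof. exact: main_aux. Qed.
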